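(* For every odd $N\ge3$ we have ${}'\mathcal X^-_{N-2}={}^\sharp\mathcal X^-_{N-2}$.
   Context: For an odd integer $M\ge3$ the following objects are defined (we write $[i,j]=\{h\in\mathbb Z:i\le h\le j\}$, empty if $i>j$). A $2$-element subset $\{i,j\}\subseteq[1,M]$ is written $ij$ when either ($i<j$ and $j-i$ odd) or ($i>j$ and $i-j$ even); each $2$-element subset has exactly one such writing. Let $\mathcal P_M$ be the set of all finite sets $B$ of pairwise disjoint $2$-element subsets of $[1,M]$; for $B\in\mathcal P_M$ let $B^0=\{\{i,j\}\in B: i-j\text{ even}\}$, $B^1=\{\{i,j\}\in B: i-j\text{ odd}\}$. A set $X\subseteq[1,M]$ is $0$-covered by $B^1$ if there are $a_1b_1,\dots,a_sb_s\in B^1$ ($s\ge0$, so $a_r<b_r$) with $X=[a_1,b_1]\sqcup\dots\sqcup[a_s,b_s]$ (disjoint union). Let ${}^*\mathcal P_M$ be the set of $B\in\mathcal P_M$ such that: for every $ij\in B^1$, $[i+1,j-1]$ is $0$-covered by $B^1$; and there is a sequence $(i_1,\dots,i_{2s})$ in $[1,M]$ with $B^0=\{i_{2s}i_1,i_{2s-1}i_2,\dots,i_{s+1}i_s\}$ ($s=|B^0|$; unique) such that, if $s\ge1$, each of $[i_1+1,i_2-1],\dots,[i_{s-1}+1,i_s-1],[i_{s+1}+1,i_{s+2}-1],\dots,[i_{2s-1}+1,i_{2s}-1]$ is $0$-covered by $B^1$. Let $\mathcal X^-_{M-2}$ be the set of $B\in{}^*\mathcal P_M$ such that: either $s=0$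 or both $[1,i_1-1]$ and $[i_{2s}+1,M]$ are $0$-covered by $B^1$; and if $s$ is even then $\{i,M\}\in B$ for some even $i$, if $s$ is odd then $\{i,M\}\in B$ for some odd $i$. Let ${}'\mathcal X^-_{M-2}$ be the set of $B\in\mathcal X^-_{M-2}$ with $|B^0|$ even (equivalently, $\{i,M\}\in B$ for some even $i$). For odd $M\ge5$ and $k\in[1,M-1]$ let $\iota_k:[1,M-2]\to[1,M]$ be $\iota_k(i)=i$ for $i<k$ and $\iota_k(i)=i+2$ for $i\ge k$, and let $I_k:\mathcal P_{M-2}\to\mathcal P_M$ send $B$ to $\{\{\iota_k(a),\iota_k(b)\}:\{a,b\}\in B\}\cup\{\{k,k+1\}\}$. Let ${}'Pr^-_{M-2}\subseteq\mathcal P_M$ consist of $\{\{M-1,M\}\}$ and of the sets $\{\{M-1,M\},\{M-2,1\},\{M-3,2\},\dots,\{M-1-\tau,\tau\}\}$ for even $\tau\in[2,(M-3)/2]$. Define ${}^\sharp\mathcal X^-_{M-2}\subseteq\mathcal P_M$ recursively: ${}^\sharp\mathcal X^-_1=\{\{\{2,3\}\}\}\subseteq\mathcal P_3$; for $M\ge5$, $B\in\mathcal P_M$ lies in ${}^\sharp\mathcal X^-_{M-2}$ iff either $B\in{}'Pr^-_{M-2}$ or $B=I_k(B')$ for some $B'\in{}^\sharp\mathcal X^-_{M-4}$ and $k\in[1,M-2]$. *)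

(* Defs.v *)
From HB Require Import structures.
From mathcomp Require Import all_boot finmap.
Set Implicit Arguments.
Unset Strict Implicit.
Unset Printing Implicit Defensive.
Local Open Scope fset_scope.
Local Open Scope nat_scope.

(* A candidate B is a finite set of finite sets of naturals; {fset _}
   equality is Leibniz (extensional), so set equalities below are genuine. *)
Notation pairing := {fset {fset nat}}.

Definition isP (M : nat) (B : pairing) : Prop :=
  (forall e, e \in B -> #|` e| = 2 /\ (forall x, x \in e -> 1 <= x <= M)) /\
  (forall e f, e \in B -> f \in B -> e != f -> (e `&` f)%fset = fset0).

(* "ij in B^1": {i,j} in B written ij with i<j, j-i odd. *)
Definition wr1 (B : pairing) (i j : nat) : Prop :=
  [fset i; j] \in B /\ i < j /\ odd (j - i).

Definition evenpair (e : {fset nat}) : bool :=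
  all (fun x => all (fun y => ~~ odd (x + y)) e) e.
Definition B0 (B : pairing) : pairing := [fset e in B | evenpair e]%fset.

Definition inI (p : nat * nat) (h : nat) : bool := (p.1 <= h) && (h <= p.2).
Definition zcov (B : pairing) (lo hi : nat) : Prop :=
  exists S : seq (nat * nat),
    (forall p, p \in S -> wr1 B p.1 p.2) /\
    (forall r r', r < size S -> r' < size S -> r <> r' ->
       forall h, ~ (inI (nth (0,0) S r) h /\ inI (nth (0,0) S r') h)) /\
    (forall h, (lo <= h <= hi) <-> exists2 p, p \in S & inI p h).

(* The sequence (i_1,...,i_2s) (0-indexed here: ix`_0 ... ix`_(2s-1)) with
   B^0 = {i_2s i_1, ..., i_{s+1} i_s} and the 0-covering conditions of *P_M. *)
Definition seqcond (M : nat) (B : pairing) (ix : seq nat) : Prop :=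
  let s := #|` B0 B| in
  let i := fun r => nth 0 ix r in
  size ix = s.*2 /\
  (forall r, r < s.*2 -> 1 <= i r <= M) /\
  B0 B = [fset [fset i (s.*2 - 1 - r); i r] | r in iota 0 s] /\
  (forall r, r < s -> i r < i (s.*2 - 1 - r)) /\
  (forall r, r.+1 < s -> zcov B (i r).+1 (i r.+1).-1) /\
  (forall r, s <= r -> r.+1 < s.*2 -> zcov B (i r).+1 (i r.+1).-1).

Definition Xminus (M : nat) (B : pairing) : Prop :=
  isP M B /\
  (forall i j, wr1 B i j -> zcov B i.+1 j.-1) /\
  exists ix : seq nat, seqcond M B ix /\
    let s := #|` B0 B| in
    (s = 0 \/ (zcov B 1 (nth 0 ix 0).-1 /\ zcov B (nth 0 ix (s.*2 - 1)).+1 M)) /\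
    (if odd s then exists i, odd i /\ [fset i; M] \in B
              else exists i, ~~ odd i /\ [fset i; M] \in B).

Definition primeX (M : nat) (B : pairing) : Prop :=
  Xminus M B /\ ~~ odd #|` B0 B|.

Definition iotak (k i : nat) : nat := if i < k then i else i.+2.
Definition Ik (k : nat) (B : pairing) : pairing :=
  ([fset [fset iotak k x | x : nat in e] | e : {fset nat} in B] `|` [fset [fset k; k.+1]])%fset.

Definition PrSet (M tau : nat) : pairing :=
  ([fset [fset M.-1; M]] `|` [fset [fset M.-1 - r; r] | r in iota 1 tau])%fset.
Definition primePr (M : nat) (B : pairing) : Prop :=
  B = [fset [fset M.-1; M]] \/
  exists tau, ~~ odd tau /\ 2 <= tau <= (M - 3)./2 /\ B = PrSet M tau.

(* #X^-_{M-2} for M = 2n+3, by recursion on n. *)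
Fixpoint sharpR (n : nat) (B : pairing) : Prop :=
  match n with
  | 0 => B = [fset [fset 2; 3]]
  | n'.+1 =>
      let M := n'.*2 + 5 in
      primePr M B \/
      exists k (B' : pairing), 1 <= k <= M - 2 /\ sharpR n' B' /\ B = Ik k B'
  end.
Definition sharpX (M : nat) (B : pairing) : Prop := sharpR (M - 3)./2 B.

(* Main.v *)
Require Import Defs.
From HB Require Import structures.
From mathcomp Require Import all_boot finmap zify.
Set Implicit Arguments.
Unset Strict Implicit.
Unset Printing Implicit Defensive.
Local Open Scope fset_scope.
Local Open Scope nat_scope.


Inductive tiles (B : pairing) : nat -> nat -> Prop :=
| T0 lo hi : hi < lo -> tiles B lo hi
| TS lo b hi : wr1 B lo b -> b <= hi -> tiles B b.+1 hi -> tiles B lo hi.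

Definition zcovv (B : pairing) (lo hi : nat) : Prop :=
  exists S : seq (nat * nat),
    (forall p, p \in S -> wr1 B p.1 p.2) /\
    (forall p q, p \in S -> q \in S -> p <> q ->
       forall h, ~ (inI p h /\ inI q h)) /\
    (forall h, (lo <= h <= hi) <-> exists2 p, p \in S & inI p h).

Lemma zcov_zcovv B lo hi : zcov B lo hi -> zcovv B lo hi.
Proof.
case=> S [H1 [H2 H3]]; exists S; split=> //; split=> // p q pS qS.
case/(nthP (0,0)): pS => r rS <-; case/(nthP (0,0)): qS => r' r'S <- pq h.
have ne : r <> r' by move=> e; apply: pq; rewrite e.
exact: (H2 r r' rS r'S ne h).
Qed.

Lemma zcovv_tiles B lo hi : zcovv B lo hi -> tiles B lo hi.
Proof.
move eqn: (hi.+1 - lo) => n; elim: n {-2}n (leqnn n) lo eqn => [|n IH] n0 Hn lo eqn.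
  move=> _; apply: T0; lia.
case=> S [H1 [H2 H3]].
case: (ltnP hi lo) => Hlh; first by apply: T0.
have [[a b] pS plo] : exists2 p, p \in S & inI p lo by apply/H3; lia.
set p := (a, b) in pS plo *.
have w := H1 p pS; case: w => _ [plt _].
have Hp1 : inI p p.1 by rewrite /inI leqnn ltnW.
have Hp2 : inI p p.2 by rewrite /inI leqnn ltnW.
have /H3 r1 : exists2 q, q \in S & inI q p.1 by exists p.
have /H3 r2 : exists2 q, q \in S & inI q p.2 by exists p.
move: plo; rewrite /inI => /andP [pl1 pl2].
rewrite /= in r1 r2 pl1 pl2 plt.
have e1 : a = lo by lia.
apply: (@TS _ _ b); first by rewrite -e1; apply: (H1 p).
  lia.
apply: (IH (hi.+1 - b.+1) _ b.+1 erefl); first by lia.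
exists (filter (predC1 p) S); split.
  by move=> q; rewrite mem_filter => /andP [_ /H1].
split.
  move=> q q' ; rewrite !mem_filter => /andP [_ qS] /andP [_ q'S]; exact: H2.
move=> h; split.
  move=> hh; have [q qS qh] : exists2 q, q \in S & inI q h by apply/H3; lia.
  exists q => //; rewrite mem_filter qS andbT /=; apply/eqP => eqp.
  move: qh; rewrite eqp /inI /p /=; lia.
case=> q; rewrite mem_filter => /andP [/= qp qS] qh.
have /H3 hr : exists2 q, q \in S & inI q h by exists q.
have nd : ~ (inI p h /\ inI q h) by apply: H2 => //; apply/eqP; rewrite eq_sym.
move: nd; rewrite /inI /p /=; move: qh; rewrite /inI => qh; lia.
Qed.

Lemma tiles_zcov B lo hi : tiles B lo hi -> zcov B lo hi.
Proof.
elim=> {lo hi} [lo hi hl|lo b hi w bh _ [S [H1 [H2 H3]]]].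
  exists [::]; split=> //; split=> // h; split; first lia.
  by case.
exists ((lo, b) :: S); split.
  by move=> p; rewrite inE => /orP [/eqP -> //|/H1].
have Sin : forall q h, q \in S -> inI q h -> b.+1 <= h <= hi.
  by move=> q h qS qh; apply/H3; exists q.
case: w => _ [lb _].
split.
  move=> [|r] [|r'] //= rs r's rr' h.
  - have := Sin (nth (0,0) S r') h (mem_nth _ r's); rewrite /inI /=; lia.
  - have := Sin (nth (0,0) S r) h (mem_nth _ rs); rewrite /inI /=; lia.
  - apply: H2 => //; congruence.
move=> h; split.
  move=> hh; case: (leqP h b) => hb.
    by exists (lo, b); rewrite ?inE ?eqxx // /inI /=; apply/andP; lia.
  have [q qS qh] : exists2 q, q \in S & inI q h by apply/H3; lia.
  by exists q => //; rewrite inE qS orbT.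
case=> q; rewrite inE => /orP [/eqP -> |qS]; first by rewrite /inI /=; lia.
move=> qh; have := Sin q h qS qh; lia.
Qed.

Lemma zcovE B lo hi : zcov B lo hi <-> tiles B lo hi.
Proof. split; [move=> /zcov_zcovv; exact: zcovv_tiles | exact: tiles_zcov]. Qed.


Lemma tilesP B lo hi : tiles B lo hi <->
  hi < lo \/ exists b, [/\ wr1 B lo b, b <= hi & tiles B b.+1 hi].
Proof.
split; first by case=> [l h hl|l b h w bh t]; [left|right; exists b].
by case=> [hl|[b [w bh t]]]; [apply: T0|apply: (TS w)].
Qed.

Ltac ifs := repeat (match goal with
  | |- context [if ?c then _ else _] =>
     lazymatch c with context [if _ then _ else _] => fail | _ => case: (boolP c) => ? end
  end); try lia.

Definition kap k x := if x < k then x else x - 2.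
Definition iset k (e : {fset nat}) : {fset nat} := [fset iotak k x | x : nat in e].
Definition Lk k lo := if lo <= k then lo else lo.+2.
Definition Hk k hi := if hi.+1 < k then hi else hi.+2.

Lemma kapK k x : kap k (iotak k x) = x.
Proof. rewrite /kap /iotak; ifs. Qed.

Lemma iotakK k y : y != k -> y != k.+1 -> iotak k (kap k y) = y.
Proof. rewrite /kap /iotak => h1 h2; ifs. Qed.

Lemma iotak_inj k : injective (iotak k).
Proof. by move=> x y e; rewrite -(kapK k x) e kapK. Qed.

Lemma iotak_lt k a b : (iotak k a < iotak k b) = (a < b).
Proof. rewrite /iotak; ifs. Qed.

Lemma iotak_le k a b : (iotak k a <= iotak k b) = (a <= b).
Proof. rewrite /iotak; ifs. Qed.

Lemma odd_iotak k x : odd (iotak k x) = odd x.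
Proof. by rewrite /iotak; case: ifP => //= _; rewrite negbK. Qed.

Lemma iotak_neq k x : iotak k x != k /\ iotak k x != k.+1.
Proof. rewrite /iotak; ifs. Qed.

Lemma isetK k e : [fset kap k y | y in iset k e] = e.
Proof.
apply/fsetP => x; apply/imfsetP/idP => [[y /imfsetP [z zin ->] ->]|xe].
  by rewrite kapK.
by exists (iotak k x); [apply/imfsetP; exists x|rewrite kapK].
Qed.

Lemma iset_inj k : injective (iset k).
Proof. by move=> e1 e2 E; rewrite -(isetK k e1) E isetK. Qed.

Lemma iset2 k a b : iset k [fset a; b] = [fset iotak k a; iotak k b].
Proof. exact: imfset_fset2. Qed.

Lemma in_iset k e y : (y \in iset k e) = (kap k y \in e) && (y != k) && (y != k.+1).
Proof.
apply/imfsetP/idP => [[x xe ->]|/andP [/andP [ye h1] h2]].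
  by rewrite kapK xe; case: (iotak_neq k x) => -> ->.
by exists (kap k y); rewrite ?iotakK.
Qed.

Lemma mem_iset k e x : (iotak k x \in iset k e) = (x \in e).
Proof. by rewrite in_iset kapK; case: (iotak_neq k x) => -> ->; rewrite !andbT. Qed.

Lemma imfset_injS (T U : choiceType) (F : T -> U) : injective F ->
  injective (fun X : {fset T} => [fset F x | x in X]).
Proof.
move=> Fi X Y E; apply/fsetP => x.
by rewrite -(mem_imfset imfset_key _ Fi) /= E (mem_imfset imfset_key _ Fi).
Qed.

Definition newp k : {fset nat} := [fset k; k.+1].

Lemma IkE k B : Ik k B = [fset iset k e | e in B] `|` [fset newp k].
Proof. by []. Qed.

Lemma in_Ik k B e : (e \in Ik k B) = (e == newp k) || (e \in [fset iset k e | e in B]).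
Proof. by rewrite IkE in_fsetU in_fset1 orbC. Qed.

Lemma iset_neq_new k e : iset k e != newp k.
Proof.
apply/negP => /eqP E; have : k \in iset k e by rewrite E fset21.
by rewrite in_iset eqxx andbF.
Qed.

Lemma mem_Ik_iset k B e : (iset k e \in Ik k B) = (e \in B).
Proof.
rewrite in_Ik (negbTE (iset_neq_new k e)) /=.
exact: (mem_imfset imfset_key _ (@iset_inj k)).
Qed.

Lemma new_in_Ik k B : newp k \in Ik k B.
Proof. by rewrite in_Ik eqxx. Qed.

Lemma wr1_new k B : wr1 (Ik k B) k k.+1.
Proof. split; first exact: new_in_Ik. by split=> //; rewrite subSnn. Qed.

Lemma wr1_Ik k B a b : wr1 (Ik k B) (iotak k a) (iotak k b) <-> wr1 B a b.
Proof.
rewrite /wr1 -iset2 mem_Ik_iset iotak_lt.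
have E : a < b -> odd (iotak k b - iotak k a) = odd (b - a).
  move=> ab; rewrite !oddB ?odd_iotak ?iotak_le //; exact: ltnW.
by split=> -[h1 [h2 h3]]; split=> //; split=> //; [rewrite -E | rewrite E].
Qed.

Lemma wr1_Ik_inv k B x c : wr1 (Ik k B) x c ->
  (x = k /\ c = k.+1) \/ exists a b, [/\ x = iotak k a, c = iotak k b & wr1 B a b].
Proof.
case=> h1 [h2 h3]; move: h1; rewrite in_Ik => /orP [/eqP E|].
  left; have : x \in newp k by rewrite -E fset21.
  have : c \in newp k by rewrite -E fset22.
  rewrite !in_fset2; lia.
case/imfsetP => e eB E; right.
have : x \in iset k e by rewrite -E fset21.
have : c \in iset k e by rewrite -E fset22.
rewrite !in_iset => /andP [/andP [ce c1] c2] /andP [/andP [xe x1] x2].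
exists (kap k x), (kap k c); rewrite !iotakK //; split=> //.
apply/(wr1_Ik k); rewrite !iotakK //; split; last by split.
by rewrite E mem_Ik_iset.
Qed.

Lemma tiles_Ik_fwd k B lo hi : tiles B lo hi -> tiles (Ik k B) (Lk k lo) (Hk k hi).
Proof.
elim=> {lo hi} [lo hi hl|lo b hi w bh t IH].
  case: (boolP ((lo == k) && (hi.+1 == k))) => [/andP [/eqP e1 /eqP e2]|hne].
    rewrite /Lk /Hk e1 -e2 leqnn ltnn; apply: (TS (wr1_new _ _)) => //.
    by apply: T0.
  apply: T0; move: hne; rewrite /Lk /Hk; ifs.
have lb : lo < b by case: w => _ [].
have eL : Lk k b.+1 = (iotak k b).+1 by rewrite /Lk /iotak; ifs.
have bH : iotak k b <= Hk k hi.
  rewrite /Hk /iotak; ifs.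
rewrite eL in IH.
case: (boolP (lo == k)) => [/eqP elo|nlo].
  have hk : Hk k hi = hi.+2 by rewrite /Hk; ifs.
  rewrite /Lk elo leqnn; apply: (TS (wr1_new _ _)); first by rewrite hk; lia.
  have -> : k.+2 = iotak k lo by rewrite /iotak elo ltnn.
  by apply: (TS _ bH IH); apply/wr1_Ik.
have -> : Lk k lo = iotak k lo by move: nlo; rewrite /Lk /iotak; ifs.
by apply: (TS _ bH IH); apply/wr1_Ik.
Qed.

Lemma tiles_Ik_bwd k B lo hi : tiles (Ik k B) (Lk k lo) (Hk k hi) -> tiles B lo hi.
Proof.
move eqn: (hi.+1 - lo) => n; elim: n {-2}n (leqnn n) lo eqn => [|n IH] n0 Hn lo eqn.
  move=> _; apply: T0; lia.
case: (ltnP hi lo) => Hlh; first by move=> _; apply: T0.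
have key : forall a c, wr1 (Ik k B) (iotak k a) c -> c <= Hk k hi ->
    tiles (Ik k B) c.+1 (Hk k hi) -> a = lo -> tiles B lo hi.
  move=> a c w ch t alo; case: (wr1_Ik_inv w) => [[e _]|[a' [b' [e1 e2 w']]]].
    by case: (iotak_neq k a); rewrite e eqxx.
  move: (iotak_inj e1) => ea; subst c a' a.
  have lb : lo < b' by case: w' => _ [].
  have bh : b' <= hi by move: ch; rewrite /Hk /iotak; ifs.
  apply: (TS w' bh); apply: (IH (hi.+1 - b'.+1) _ b'.+1 erefl); first lia.
  have -> : Lk k b'.+1 = (iotak k b').+1 by rewrite /Lk /iotak; ifs.
  exact: t.
case/tilesP => [hl|[c [w ch t]]].
  by move: hl; rewrite /Lk /Hk; ifs.
case: (boolP (lo == k)) => [/eqP elo|nlo]; last first.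
  have eL : Lk k lo = iotak k lo by move: nlo; rewrite /Lk /iotak; ifs.
  by rewrite eL in w; apply: (key lo c).
have hk : Hk k hi = hi.+2 by rewrite /Hk; ifs.
move: w; rewrite /Lk elo leqnn => w.
case: (wr1_Ik_inv w) => [[_ ec]|[a' [b' [e1 _ _]]]]; last first.
  by case: (iotak_neq k a'); rewrite -e1 eqxx.
subst c; case/tilesP: t => [hl|[c [w2 ch2 t2]]].
  move: hl; rewrite hk; lia.
have e2 : k.+2 = iotak k k by rewrite /iotak ltnn.
rewrite e2 in w2; rewrite -elo; exact: (key k c w2 ch2 t2 (esym elo)).
Qed.

Lemma tiles_Ik k B lo hi : tiles (Ik k B) (Lk k lo) (Hk k hi) <-> tiles B lo hi.
Proof. split; [exact: tiles_Ik_bwd | exact: tiles_Ik_fwd]. Qed.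

Lemma zcov_Ik k B lo hi : zcov (Ik k B) (Lk k lo) (Hk k hi) <-> zcov B lo hi.
Proof. by rewrite !zcovE tiles_Ik. Qed.

Lemma card_iset k e : #|` iset k e| = #|` e|.
Proof. by rewrite card_imfset //; apply: iotak_inj. Qed.

Lemma range_iotak k m x : 1 <= k <= m -> (1 <= iotak k x <= m.+2) = (1 <= x <= m).
Proof. move=> hk; rewrite /iotak; ifs; apply/idP/idP; lia. Qed.

Lemma fdisjP (e f : {fset nat}) : (forall x, x \in e -> x \in f -> False) -> e `&` f = fset0.
Proof.
move=> H; apply/fsetP => x; rewrite in_fsetI in_fset0.
by apply/negP => /andP [] /H H1 /H1.
Qed.

Lemma fdisjE (e f : {fset nat}) x : e `&` f = fset0 -> x \in e -> x \in f -> False.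
Proof. by move/fsetP => /(_ x); rewrite in_fsetI in_fset0 => E xe xf; rewrite xe xf in E. Qed.

Lemma isP_Ik k m B : 1 <= k <= m -> isP m.+2 (Ik k B) <-> isP m B.
Proof.
move=> hk; split=> [[H1 H2]|[H1 H2]].
  split.
    move=> e eB; have [c r] := H1 _ (etrans (mem_Ik_iset k B e) eB).
    split; first by rewrite -(card_iset k).
    by move=> x xe; rewrite -(range_iotak x hk); apply: r; rewrite mem_iset.
  move=> e f eB fB ef; apply: fdisjP => x xe xf.
  have ef' : iset k e != iset k f by apply: contra ef => /eqP /iset_inj ->.
  have := H2 _ _ (etrans (mem_Ik_iset k B e) eB) (etrans (mem_Ik_iset k B f) fB) ef'.
  by move/(@fdisjE _ _ (iotak k x)); apply; rewrite mem_iset.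
split.
  move=> e; rewrite in_Ik => /orP [/eqP ->|/imfsetP [e' e'B ->]].
    split; first by rewrite /newp cardfs2; case: eqVneq => //; lia.
    by move=> x; rewrite in_fset2 => /orP [] /eqP ->; lia.
  have [c r] := H1 _ e'B; split; first by rewrite card_iset.
  move=> x; rewrite in_iset => /andP [/andP [xe x1] x2].
  by rewrite -(iotakK x1 x2) range_iotak //; apply: r.
have ni : forall e x, x \in iset k e -> x \in newp k -> False.
  move=> e x; rewrite in_iset in_fset2 => /andP [/andP [_ h1] h2]; by rewrite (negbTE h1) (negbTE h2).
move=> e f; rewrite !in_Ik => /orP [/eqP ->|/imfsetP [e' e'B ->]] /orP [/eqP ->|/imfsetP [f' f'B ->]].
- by rewrite eqxx.
- by move=> _; apply: fdisjP => x xn xi; apply: (ni f' x).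
- by move=> _; apply: fdisjP => x xi xn; apply: (ni e' x).
move=> ef; have ef' : e' != f' by apply: contra ef => /eqP ->.
apply: fdisjP => x; rewrite !in_iset => /andP [/andP [xe _] _] /andP [/andP [xf _] _].
exact: (fdisjE (H2 _ _ e'B f'B ef') xe xf).
Qed.

Lemma evenpairP (e : {fset nat}) :
  reflect (forall x y, x \in e -> y \in e -> ~~ odd (x + y)) (evenpair e).
Proof.
apply: (iffP allP) => [H x y xe ye|H x xe].
  by have /allP := H x xe; apply.
by apply/allP => y ye; apply: H.
Qed.

Lemma evenpair_iset k e : evenpair (iset k e) = evenpair e.
Proof.
apply/evenpairP/evenpairP => H x y xe ye.
  by have := H _ _ (etrans (mem_iset k e x) xe) (etrans (mem_iset k e y) ye);
     rewrite !oddD !odd_iotak.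
move: xe ye; rewrite !in_iset => /andP [/andP [xe x1] x2] /andP [/andP [ye y1] y2].
have := H _ _ xe ye; rewrite !oddD -(odd_iotak k (kap k x)) -(odd_iotak k (kap k y)).
by rewrite !iotakK.
Qed.

Lemma evenpair_new k : evenpair (newp k) = false.
Proof.
apply/negP => /evenpairP H; have := H k k.+1 (fset21 _ _) (fset22 _ _).
by rewrite addnS /= oddD negbK addbb.
Qed.

Lemma in_B0 B e : (e \in B0 B) = (e \in B) && evenpair e.
Proof. by rewrite /B0 !inE. Qed.

Lemma B0_Ik k B : B0 (Ik k B) = [fset iset k e | e in B0 B].
Proof.
apply/fsetP => e; rewrite in_B0.
apply/andP/imfsetP => [[]|[e' /= ]].
  rewrite in_Ik => /orP [/eqP ->|/imfsetP [e' /= e'B ->]]; first by rewrite evenpair_new.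
  by rewrite evenpair_iset => ev; exists e' => //; rewrite in_B0 e'B ev.
rewrite in_B0 => /andP [e'B ev] ->; split; first by rewrite mem_Ik_iset.
by rewrite evenpair_iset.
Qed.

Lemma card_B0_Ik k B : #|` B0 (Ik k B)| = #|` B0 B|.
Proof. by rewrite B0_Ik card_imfset //; apply: iset_inj. Qed.

Lemma nth_map0 (f : nat -> nat) s r : f 0 = 0 -> nth 0 (map f s) r = f (nth 0 s r).
Proof. by move=> f0; elim: s r => [|x s IH] [|r] //=. Qed.

Lemma iotak0 k : 1 <= k -> iotak k 0 = 0.
Proof. by rewrite /iotak => ->. Qed.

Lemma gap_Ik k B a b : 1 <= k -> 1 <= b ->
  zcov (Ik k B) (iotak k a).+1 (iotak k b).-1 <-> zcov B a.+1 b.-1.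
Proof.
move=> hk hb; rewrite -(zcov_Ik k B a.+1 b.-1).
have -> : Lk k a.+1 = (iotak k a).+1 by rewrite /Lk /iotak; ifs.
have -> : Hk k b.-1 = (iotak k b).-1 by rewrite /Hk /iotak; ifs.
by [].
Qed.

Lemma seqcond_Ik k m B ix : 1 <= k <= m ->
  seqcond m.+2 (Ik k B) (map (iotak k) ix) <-> seqcond m B ix.
Proof.
move=> hk; rewrite /seqcond card_B0_Ik size_map.
set s := #|` B0 B|.
have nm : forall r, nth 0 (map (iotak k) ix) r = iotak k (nth 0 ix r).
  by move=> r; apply: nth_map0; apply: iotak0; case/andP: hk.
have k1 : 1 <= k by case/andP: hk.
have C2 : (forall r, r < s.*2 -> 1 <= nth 0 (map (iotak k) ix) r <= m.+2) <->
          (forall r, r < s.*2 -> 1 <= nth 0 ix r <= m).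
  by split=> H r /H; rewrite nm range_iotak.
have E : [fset [fset nth 0 (map (iotak k) ix) (s.*2 - 1 - r); nth 0 (map (iotak k) ix) r]
            | r in iota 0 s] =
         [fset iset k x | x in [fset [fset nth 0 ix (s.*2 - 1 - r); nth 0 ix r] | r in iota 0 s]].
  by rewrite -imfset_comp; apply: eq_imfset => // r /=; rewrite !nm iset2.
rewrite B0_Ik E.
split=> -[h1 [h2 [h3 [h4 [h5 h6]]]]].
  have h2' := (proj1 C2 h2).
  split=> //; split=> //; split; first exact: (imfset_injS (@iset_inj k) h3).
  split; first by move=> r /h4; rewrite !nm iotak_lt.
  split.
    move=> r rs; have := h5 r rs; rewrite !nm gap_Ik //.
    by have := h2' r.+1; lia.
  move=> r r1 r2; have := h6 r r1 r2; rewrite !nm gap_Ik //.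
  by have := h2' r.+1; lia.
split=> //; split; first exact: (proj2 C2 h2).
split; first by rewrite h3.
split; first by move=> r /h4; rewrite !nm iotak_lt.
split.
  move=> r rs; rewrite !nm gap_Ik //; first exact: h5.
  by have := h2 r.+1; lia.
move=> r r1 r2; rewrite !nm gap_Ik //; first exact: h6.
by have := h2 r.+1; lia.
Qed.


Lemma parity_Ik k m B (P : bool -> Prop) : 1 <= k <= m ->
  (exists i, P (odd i) /\ [fset i; m.+2] \in Ik k B) <->
  (exists i, P (odd i) /\ [fset i; m] \in B).
Proof.
move=> hk; have im : iotak k m = m.+2 by rewrite /iotak; ifs.
split=> -[i [Pi iB]].
  move: iB; rewrite in_Ik => /orP [/eqP E|/imfsetP [e eB E]].
    have : m.+2 \in newp k by rewrite -E fset22.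
    rewrite in_fset2; lia.
  have : i \in iset k e by rewrite -E fset21.
  rewrite in_iset => /andP [/andP [_ i1] i2].
  exists (kap k i); rewrite -(odd_iotak k) iotakK //; split=> //.
  have -> : [fset kap k i; m] = e.
    by apply: (@iset_inj k); rewrite iset2 iotakK // im.
  by [].
exists (iotak k i); rewrite odd_iotak; split=> //.
by rewrite -im -iset2 mem_Ik_iset.
Qed.

Lemma arcs_Ik k B : 1 <= k ->
  (forall i j, wr1 (Ik k B) i j -> zcov (Ik k B) i.+1 j.-1) <->
  (forall a b, wr1 B a b -> zcov B a.+1 b.-1).
Proof.
move=> k1; split=> H.
  move=> a b w; have lab : a < b by case: w => _ [].
  have hb : 1 <= b by lia.
  apply: (proj1 (gap_Ik B a k1 hb)).
  by apply: H; apply/wr1_Ik.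
move=> i j /wr1_Ik_inv [[-> ->]|[a [b [-> -> w]]]].
  by apply/zcovE; apply: T0.
have lab : a < b by case: w => _ [].
have hb : 1 <= b by lia.
by apply: (proj2 (gap_Ik B a k1 hb)); apply: H.
Qed.

Lemma seq_in_image k m B ix : seqcond m.+2 (Ik k B) ix ->
  map (iotak k) (map (kap k) ix) = ix.
Proof.
case=> [h1 [_ [h3 _]]].
rewrite -map_comp; apply: map_id_in => y /(nthP 0) [r rs <-] /=.
rewrite h1 in rs.
set s := #|` B0 (Ik k B)| in h1 h3 rs *.
pose r' := if r < s then r else s.*2 - 1 - r.
have r's : r' < s by rewrite /r'; ifs.
have yin : nth 0 ix r \in [fset nth 0 ix (s.*2 - 1 - r'); nth 0 ix r'].
  rewrite in_fset2 /r'; case: ifP => H; first by rewrite eqxx orbT.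
  have -> : s.*2 - 1 - (s.*2 - 1 - r) = r by move/negbT: H; lia.
  by rewrite eqxx.
have : [fset nth 0 ix (s.*2 - 1 - r'); nth 0 ix r'] \in B0 (Ik k B).
  by rewrite h3; apply/imfsetP; exists r' => //=; rewrite mem_iota.
rewrite in_B0 in_Ik => /andP [/orP [/eqP E|/imfsetP [e _ E]] ev].
  by rewrite E evenpair_new in ev.
move: yin; rewrite E in_iset => /andP [/andP [_ y1] y2].
exact: iotakK.
Qed.

Lemma Xminus_Ik k m B : 1 <= k <= m -> Xminus m.+2 (Ik k B) <-> Xminus m B.
Proof.
move=> hk; have k1 : 1 <= k by case/andP: hk.
rewrite /Xminus isP_Ik // arcs_Ik // card_B0_Ik.
have im : Hk k m = m.+2 by rewrite /Hk; ifs.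
have nm : forall ix r, nth 0 (map (iotak k) ix) r = iotak k (nth 0 ix r).
  by move=> ix r; apply: nth_map0; apply: iotak0.
set s := #|` B0 B|.
have main : forall ix, seqcond m B ix ->
  ((s = 0 \/ zcov (Ik k B) 1 (nth 0 (map (iotak k) ix) 0).-1 /\
      zcov (Ik k B) (nth 0 (map (iotak k) ix) (s.*2 - 1)).+1 m.+2) <->
   (s = 0 \/ zcov B 1 (nth 0 ix 0).-1 /\ zcov B (nth 0 ix (s.*2 - 1)).+1 m)).
  move=> ix [_ [h2 _]].
  have e1 : s != 0 -> zcov (Ik k B) 1 (nth 0 (map (iotak k) ix) 0).-1 <-> zcov B 1 (nth 0 ix 0).-1.
    move=> s0; rewrite nm.
    have hb : 1 <= nth 0 ix 0 by have := h2 0; lia.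
    by have := gap_Ik B 0 k1 hb; rewrite iotak0.
  have e2 : zcov (Ik k B) (nth 0 (map (iotak k) ix) (s.*2 - 1)).+1 m.+2 <->
            zcov B (nth 0 ix (s.*2 - 1)).+1 m.
    rewrite nm; have := zcov_Ik k B (nth 0 ix (s.*2 - 1)).+1 m; rewrite im.
    by have -> : Lk k (nth 0 ix (s.*2 - 1)).+1 = (iotak k (nth 0 ix (s.*2 - 1))).+1
      by rewrite /Lk /iotak; ifs.
  case: (eqVneq s 0) => s0; first by split=> _; left.
  have E1 := e1 s0.
  split.
    case=> [H|[a b]]; first by left.
    by right; split; [exact: (proj1 E1 a) | exact: (proj1 e2 b)].
  case=> [H|[a b]]; first by left.
  by right; split; [exact: (proj2 E1 a) | exact: (proj2 e2 b)].
have par : forall P : bool -> Prop, 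
  (exists i, P (odd i) /\ [fset i; m.+2] \in Ik k B) <-> (exists i, P (odd i) /\ [fset i; m] \in B).
  by move=> P; apply: parity_Ik.
split=> -[H1 [H2 [ix [sc [bd pa]]]]]; split=> //; split=> //.
  have E := seq_in_image sc; rewrite -E in sc bd.
  exists (map (kap k) ix); move/seqcond_Ik: sc => /(_ hk) sc; split=> //.
  split; first by apply/(main _ sc).
  by case: (odd s) pa => pa; [apply/(par id) | apply/(par negb)].
exists (map (iotak k) ix); split; first by apply/seqcond_Ik.
split; first by apply/(main _ sc).
by case: (odd s) pa => pa; [apply/(par id) | apply/(par negb)].
Qed.

Lemma primeX_Ik k m B : 1 <= k <= m -> primeX m.+2 (Ik k B) <-> primeX m B.
Proof. by move=> hk; rewrite /primeX Xminus_Ik // card_B0_Ik. Qed.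


Definition kset k (e : {fset nat}) : {fset nat} := [fset kap k x | x : nat in e].

Lemma iset_kset k e : (forall y, y \in e -> y != k /\ y != k.+1) -> iset k (kset k e) = e.
Proof.
move=> H; apply/fsetP => y; rewrite in_iset; apply/idP/idP.
  case/andP => [/andP [/imfsetP [z ze E] y1] y2].
  have [z1 z2] := H z ze.
  by rewrite -(iotakK y1 y2) E iotakK.
move=> ye; have [y1 y2] := H y ye; rewrite y1 y2 !andbT.
by apply/imfsetP; exists y.
Qed.

Lemma split_adj M B k : isP M B -> newp k \in B -> exists B', B = Ik k B'.
Proof.
move=> [_ HD] nB.
exists [fset kset k e | e in B `\ newp k].
apply/fsetP => x; rewrite in_Ik; apply/idP/idP.
  case: (eqVneq x (newp k)) => [->|xn] // xB.
  apply/imfsetP; exists (kset k x); first by apply/imfsetP; exists x => //=; rewrite in_fsetD1 xn.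
  rewrite iset_kset // => y yx.
  have := HD _ _ xB nB xn => /fdisjE /(_ yx) H.
  by split; apply/negP => /eqP E; apply: H; rewrite E /newp in_fset2 eqxx ?orbT.
case/orP => [/eqP -> //|/imfsetP [e' /imfsetP [e /= eB ->] ->]].
move: eB; rewrite in_fsetD1 => /andP [en eB].
rewrite iset_kset // => y ye.
have := HD _ _ eB nB en => /fdisjE /(_ ye) H.
by split; apply/negP => /eqP E; apply: H; rewrite E /newp in_fset2 eqxx ?orbT.
Qed.

Lemma primeX1_false B : primeX 1 B -> False.
Proof.
case=> [[[HP _] [_ [ix [_ [_ pa]]]]] ev].
rewrite (negbTE ev) in pa; case: pa => i [_ iB].
have [c r] := HP _ iB.
have := r i (fset21 _ _); have := r 1 (fset22 _ _) => _ /andP [h1 h2].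
have ei : i = 1 by lia.
by move: c; rewrite ei /= cardfs2 eqxx.
Qed.
Lemma card_iota_inj (T: choiceType) (f : nat -> T) a n :
  #|` [fset f r | r in iota a n]| = n <-> {in iota a n &, injective f}.
Proof.
set A := [fset x | x in iota a n].
have cA : #|` A| = n by rewrite card_fseq undup_id ?iota_uniq ?size_iota.
have mA : forall x, (x \in A) = (x \in iota a n) by move=> x; rewrite /A !inE.
have E : [fset f r | r in iota a n] = [fset f r | r in A].
  by apply: eq_imfset => // x; rewrite /= mA.
rewrite E; split=> [H|H].
  have /card_in_imfsetP Hi : #|` [fset f r | r in A]| == #|` A| by rewrite H cA.
  by move=> x y xi yi; apply: Hi; rewrite mA.
rewrite -cA; apply/eqP/card_in_imfsetP => x y; rewrite !mA; exact: H.
Qed.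

Lemma imfset_iotaP (T : choiceType) (f : nat -> T) a n y :
  reflect (exists2 r : nat, a <= r < a + n & y = f r) (y \in [fset f r | r in iota a n]).
Proof.
apply: (iffP idP) => [/imfsetP [r] | [r rr ->]].
  by rewrite /= mem_iota => rr ->; exists r.
by apply/imfsetP; exists r; rewrite //= mem_iota.
Qed.

Lemma oddB1 x y : x < y -> odd (y - x) = odd (x + y).
Proof. by move=> h; rewrite oddB ?oddD 1?addbC // ltnW. Qed.

Lemma zcov_empty B lo hi : hi < lo -> zcov B lo hi.
Proof. by move=> h; apply/zcovE; apply: T0. Qed.

Lemma imfset_nil (T : choiceType) (f : nat -> T) : [fset f r | r in iota 0 0] = fset0.
Proof. by apply/fsetP => x; rewrite in_fset0; apply/imfsetP => -[]. Qed.

Lemma prime_single M : odd M -> 3 <= M -> primeX M [fset [fset M.-1; M]].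
Proof.
move=> oM M3; set e := [fset M.-1; M].
have B0e : B0 [fset e] = fset0.
  apply/fsetP => x; rewrite in_B0 in_fset1 in_fset0; apply/negP => /andP [/eqP -> /evenpairP H].
  by have := H _ _ (fset21 M.-1 M) (fset22 M.-1 M); lia.
split; last by rewrite B0e cardfs0.
split.
  split.
    move=> x; rewrite in_fset1 => /eqP ->; rewrite cardfs2; split; first by case: eqVneq; lia.
    by move=> y; rewrite in_fset2 => /orP [] /eqP ->; lia.
  by move=> x y; rewrite !in_fset1 => /eqP -> /eqP ->; rewrite eqxx.
split.
  move=> i j [ij [ij1 ij2]]; apply: zcov_empty.
  move: ij; rewrite in_fset1 => /eqP E.
  have : i \in e by rewrite -E fset21.
  have : j \in e by rewrite -E fset22.
  rewrite !in_fset2; lia.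
exists [::]; rewrite /seqcond /= B0e cardfs0; split.
  split=> //; split=> //; split; first by rewrite imfset_nil.
  by split.
split; first by left.
by exists M.-1; split; [lia | rewrite fset11].
Qed.

Lemma in_PrSet M tau e : e \in PrSet M tau =
  (e == [fset M.-1; M]) || (e \in [fset [fset M.-1 - r; r] | r in iota 1 tau]).
Proof. by rewrite /PrSet in_fsetU in_fset1. Qed.

Lemma prime_Pr M tau : odd M -> ~~ odd tau -> 2 <= tau -> tau.*2 <= M - 3 ->
  primeX M (PrSet M tau).
Proof.
move=> oM etau t2 tM.
set B := PrSet M tau.
set Q := fun r => [fset M.-1 - r; r].
have memB : forall e, e \in B -> e = [fset M.-1; M] \/ exists2 r, 1 <= r <= tau & e = Q r.
  move=> e; rewrite in_PrSet => /orP [/eqP ->|/imfset_iotaP [r rr ->]]; first by left.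
  by right; exists r => //; lia.
have QB : forall r, 1 <= r <= tau -> Q r \in B.
  by move=> r rr; rewrite in_PrSet; apply/orP; right; apply/imfset_iotaP; exists r => //; lia.
have nB : [fset M.-1; M] \in B by rewrite in_PrSet eqxx.
have evQ : forall r, 1 <= r <= tau -> evenpair (Q r).
  move=> r rr; apply/evenpairP => x y; rewrite !in_fset2 => /orP [] /eqP -> /orP [] /eqP ->; lia.
have B0E : B0 B = [fset Q r | r in iota 1 tau].
  apply/fsetP => e; rewrite in_B0; apply/andP/imfset_iotaP.
    case=> /memB [->|[r rr ->]] ev.
      by move/evenpairP: ev => /(_ _ _ (fset21 M.-1 M) (fset22 M.-1 M)); lia.
    by exists r => //; lia.
  by case=> r rr ->; split; [apply: QB; lia|apply: evQ; lia].
have cB0 : #|` B0 B| = tau.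
  rewrite B0E; apply/card_iota_inj => r r'; rewrite !mem_iota => rr r'r E.
  have : r \in Q r' by rewrite -E fset22.
  rewrite in_fset2; lia.
split; last by rewrite cB0.
split.
  split.
    move=> e /memB [->|[r rr ->]].
      rewrite cardfs2; split; first by case: eqVneq; lia.
      by move=> y; rewrite in_fset2 => /orP [] /eqP ->; lia.
    rewrite cardfs2; split; first by case: eqVneq; lia.
    by move=> y; rewrite in_fset2 => /orP [] /eqP ->; lia.
  move=> e f /memB [->|[r rr ->]] /memB [->|[r' r'r ->]] ef; apply: fdisjP => x;
    rewrite ?in_fset2 //.
  - by rewrite eqxx in ef.
  - lia.
  - lia.
  - have rr' : r != r' by apply: contra ef => /eqP ->.
    lia.
split.
  move=> i j [ij [ij1 ij2]]; apply: zcov_empty.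
  case/memB: ij => [E|[r rr E]].
    have : i \in [fset M.-1; M] by rewrite -E fset21.
    have : j \in [fset M.-1; M] by rewrite -E fset22.
    rewrite !in_fset2; lia.
  have : i \in Q r by rewrite -E fset21.
  have : j \in Q r by rewrite -E fset22.
  rewrite !in_fset2 => /orP [] /eqP ej /orP [] /eqP ei; move: ij2; rewrite ei ej oddB1; lia.
pose ix := iota 1 tau ++ iota (M.-1 - tau) tau.
have nthix : forall r, r < tau.*2 ->
    nth 0 ix r = if r < tau then r.+1 else M.-1 - tau + (r - tau).
  move=> r rt; rewrite nth_cat size_iota; case: ifP => h.
    by rewrite nth_iota // add1n.
  by rewrite nth_iota //; lia.
exists ix; rewrite /seqcond cB0; split.
  split; first by rewrite size_cat !size_iota addnn.
  split.
    by move=> r rt; rewrite nthix //; ifs.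
  split.
    rewrite B0E; apply/fsetP => e; apply/imfset_iotaP/imfset_iotaP => -[r rr ->].
      exists r.-1; first lia.
      have -> : nth 0 ix (tau.*2 - 1 - r.-1) = M.-1 - r by rewrite nthix; [ifs | lia].
      by have -> : nth 0 ix r.-1 = r by rewrite nthix; [ifs | lia].
    exists r.+1; first lia.
    have -> : nth 0 ix (tau.*2 - 1 - r) = M.-1 - r.+1 by rewrite nthix; [ifs | lia].
    by have -> : nth 0 ix r = r.+1 by rewrite nthix; [ifs | lia].
  split.
    by move=> r rt; rewrite !nthix; [ifs|lia|lia].
  split.
    by move=> r rt; apply: zcov_empty; rewrite !nthix; [ifs|lia|lia].
  by move=> r r1 r2; apply: zcov_empty; rewrite !nthix; [ifs|lia|lia].
split.
  right; split; first by apply: zcov_empty; rewrite nthix; [ifs|lia].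
  have -> : nth 0 ix (tau.*2 - 1) = M.-2 by rewrite nthix; [ifs|lia].
  apply/zcovE; apply: (@TS _ _ M); last by apply: T0.
    split; first by have -> : M.-2.+1 = M.-1 by lia.
    split; first lia.
    by rewrite oddB1; lia.
  by [].
rewrite (negbTE etau); exists M.-1; split; first lia.
by [].
Qed.

Lemma primePr_primeX M B : odd M -> 3 <= M -> primePr M B -> primeX M B.
Proof.
move=> oM M3 [->|[tau [et [tr ->]]]]; first exact: prime_single.
apply: prime_Pr => //; lia.
Qed.

Lemma fpair_eq (e : {fset nat}) x y : x \in e -> y \in e -> x != y -> #|` e| = 2 ->
  e = [fset x; y].
Proof.
move=> xe ye xy ce; apply/eqP; rewrite eq_sym eqEfcard cardfs2 xy ce leqnn andbT.
by apply/fsubsetP => z; rewrite in_fset2 => /orP [] /eqP ->.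
Qed.


Lemma noadj_Pr M B : odd M -> 3 <= M -> primeX M B ->
  (forall k, 1 <= k -> k.+1 < M -> newp k \notin B) -> primePr M B.
Proof.
move=> oM M3 [[[HP HD] [Harc [ix [sc [bd pa]]]]] ev] NA.
rewrite (negbTE ev) in pa.
have rng : forall e x, e \in B -> x \in e -> 1 <= x <= M.
  by move=> e x eB xe; have [_ r] := HP e eB; apply: r.
have adj : forall d i j, j - i <= d -> wr1 B i j ->
    exists k, [/\ wr1 B k k.+1, k.+1 <= j & (j = i.+1 \/ k.+1 < j)].
  elim=> [|d IH] i j hd w; have lij : i < j by case: w => _ [].
    lia.
  case: (eqVneq j i.+1) => [ej|nj]; first by exists i; split; [rewrite -ej | rewrite ej | left].
  have := Harc i j w; move/zcovE/tilesP => [hl|[c [w' ch _]]]; first lia.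
  have lc : i.+1 < c by case: w' => _ [].
  have [k [wk kc _]] := IH i.+1 c ltac:(lia) w'.
  by exists k; split=> //; [lia | right; lia].
have arcM : forall i j, wr1 B i j -> i = M.-1 /\ j = M.
  move=> i j w; have [k [wk kj dj]] := adj _ i j (leqnn _) w.
  have jM : j <= M by case: w => jB _; have := rng _ j jB (fset22 _ _); lia.
  have k1 : 1 <= k by case: wk => kB _; have := rng _ k kB (fset21 _ _); lia.
  have kM : ~ k.+1 < M by move=> kM; have := NA k k1 kM; case: wk => -> _.
  lia.
have tilesM : forall lo hi, tiles B lo hi -> hi < lo \/ (lo = M.-1 /\ hi = M).
  move=> lo hi /tilesP [hl|[b [w bh t]]]; [by left|right].
  have [e1 e2] := arcM _ _ w; split=> //.
  move: t; rewrite e2 => /tilesP [hl|[c [w' _ _]]]; first lia.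
  have [e3 _] := arcM _ _ w'; lia.
have nM : [fset M.-1; M] \in B.
  case: pa => i [ei iB].
  have iM : i < M.
    have := rng _ i iB (fset21 _ _); have [c _] := HP _ iB.
    case: (eqVneq i M) => [eiM|]; last lia.
    by move: c; rewrite eiM cardfs2 eqxx.
  have w : wr1 B i M by split=> //; split=> //; rewrite oddB1 //; lia.
  by have [ei' _] := arcM _ _ w; rewrite -ei'.
have B0sub : forall e, e \in B0 B -> e \in B by move=> e; rewrite in_B0 => /andP [].
have nMB0 : [fset M.-1; M] \notin B0 B.
  rewrite in_B0 negb_and; apply/orP; right; apply/negP => /evenpairP H.
  have := H _ _ (fset21 M.-1 M) (fset22 M.-1 M); lia.
have B0pts : forall e x, e \in B0 B -> x \in e -> 1 <= x <= M.-2.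
  move=> e x eB0 xe; have eB := B0sub _ eB0.
  have ne : e != [fset M.-1; M] by apply: contraNneq nMB0 => <-.
  have := HD _ _ eB nM ne => /fdisjE /(_ xe) H.
  have x1 : x != M.-1 by apply/eqP => ex; apply: H; rewrite ex fset21.
  have x2 : x != M by apply/eqP => ex; apply: H; rewrite ex fset22.
  have := rng _ _ eB xe; lia.
have Bchar : forall e, e \in B -> e = [fset M.-1; M] \/ e \in B0 B.
  move=> e eB; case: (boolP (evenpair e)) => ev'; first by right; rewrite in_B0 eB.
  left; move: ev'; case/allPn => x xe /allPn [y ye]; rewrite negbK => oxy.
  have [c _] := HP _ eB.
  have gen : forall a b, a \in e -> b \in e -> a < b -> odd (a + b) -> e = [fset M.-1; M].
    move=> a b ae be ab oab; have ee := fpair_eq ae be (negbT (ltn_eqF ab)) c.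
    have w : wr1 B a b by split; [rewrite -ee | split=> //; rewrite oddB1].
    by have [e1 e2] := arcM _ _ w; rewrite ee e1 e2.
  case: (ltngtP x y) => [xy|yx|exy].
  - exact: (gen x y).
  - by apply: (gen y x) => //; rewrite addnC.
  - by move: oxy; rewrite exy addnn odd_double.
have BE : forall e, (e \in B) = (e == [fset M.-1; M]) || (e \in B0 B).
  move=> e; apply/idP/idP.
    by case/Bchar => [->|->]; rewrite ?eqxx ?orbT.
  by case/orP => [/eqP ->|/B0sub].
move: sc bd ev; set s := #|` B0 B| => sc bd ev.
case: (eqVneq s 0) => [s0|sn0].
  left; apply/fsetP => e; rewrite BE in_fset1.
  by move/cardfs0_eq: s0 => ->; rewrite in_fset0 orbF.
right; exists s; split=> //.
case: sc => [h1 [h2 [h3 [h4 [h5 h6]]]]].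
rewrite -/s in h1 h2 h3 h4 h5 h6 bd.
set i := nth 0 ix in h2 h3 h4 h5 h6 bd *.
pose P := fun a => [fset i (s.*2 - 1 - a); i a].
have Pinj : {in iota 0 s &, injective P}.
  by apply/card_iota_inj; rewrite -h3.
have PB0 : forall a, a < s -> P a \in B0 B.
  by move=> a ha; rewrite h3; apply/imfset_iotaP; exists a.
pose idx := fun r => if r < s then r else s.*2 - 1 - r.
have inP : forall r, r < s.*2 -> i r \in P (idx r).
  move=> r rs; rewrite /P /idx in_fset2; case: ifP => H; first by rewrite eqxx orbT.
  have -> : s.*2 - 1 - (s.*2 - 1 - r) = r by move/negbT: H; lia.
  by rewrite eqxx.
have vle : forall r, r < s.*2 -> 1 <= i r <= M.-2.
  move=> r rs; apply: (B0pts _ _ (PB0 (idx r) _) (inP r rs)); rewrite /idx; ifs.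
have dist : forall r r', r < s.*2 -> r' < s.*2 -> r != r' -> i r != i r'.
  move=> r r' rs r's rr'.
  case: (eqVneq (idx r) (idx r')) => [eidx|nidx].
    have : r' = s.*2 - 1 - r by move: eidx rr'; rewrite /idx; ifs.
    move=> er'; subst r'.
    case: (ltnP r s) => rl.
      by have := h4 r rl; lia.
    have := h4 (s.*2 - 1 - r) ltac:(lia).
    have -> : s.*2 - 1 - (s.*2 - 1 - r) = r by lia.
    lia.
  have PP : P (idx r) != P (idx r').
    apply: contra nidx => /eqP E; apply/eqP; apply: Pinj; rewrite ?mem_iota //.
      by rewrite /idx; ifs.
    by rewrite /idx; ifs.
  have := HD _ _ (B0sub _ (PB0 (idx r) ltac:(rewrite /idx; ifs)))
                 (B0sub _ (PB0 (idx r') ltac:(rewrite /idx; ifs))) PP.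
  move/fdisjE => H; apply/eqP => E.
  by apply: (H (i r) (inP r rs)); rewrite E; apply: inP.
have gapz : forall r, zcov B (i r).+1 (i r.+1).-1 -> r.+1 < s.*2 -> i r.+1 <= (i r).+1.
  move=> r /zcovE /tilesM [hl|[_ e2]] rs; first by have := vle r.+1 rs; lia.
  by have := vle r.+1 rs; lia.
have gap1 : forall r, r.+1 < s -> i r.+1 <= (i r).+1.
  by move=> r rs; apply: gapz; [apply: h5 | lia].
have gap2 : forall r, s <= r -> r.+1 < s.*2 -> i r.+1 <= (i r).+1.
  by move=> r r1 r2; apply: gapz; [apply: h6 | lia].
case: bd => [s0|[bd1 bd2]]; first by rewrite s0 in sn0.
have i0 : i 0 = 1.
  move/zcovE/tilesM: bd1 => [hl|[e1 _]]; last lia.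
  by have := vle 0 ltac:(lia); lia.
have ilast : i (s.*2 - 1) = M.-2.
  move/zcovE/tilesM: bd2 => [hl|[e1 _]]; last lia.
  by have := vle (s.*2 - 1) ltac:(lia); lia.
have low : forall n r, r <= n -> r < s -> i r = r.+1.
  elim=> [|n IH] r rn rs; first by have -> : r = 0 by lia.
  case: (leqP r n) => [rn'|rn']; first exact: IH.
  have er : r = n.+1 by lia.
  have g := gap1 n ltac:(lia); rewrite (IH n (leqnn n) ltac:(lia)) -er in g.
  case: (ltnP (i r) r.+1) => h; last lia.
  have v := vle r ltac:(lia).
  have e' := IH (i r).-1 ltac:(lia) ltac:(lia).
  have := dist r (i r).-1 ltac:(lia) ltac:(lia) ltac:(lia); rewrite e'; lia.
have high : forall n r, r <= n -> r < s -> i (s.*2 - 1 - r) = M.-2 - r.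
  elim=> [|n IH] r rn rs; first by (have -> : r = 0 by lia); rewrite !subn0.
  case: (leqP r n) => [rn'|rn']; first exact: IH.
  have er : r = n.+1 by lia.
  have g := gap2 (s.*2 - 1 - r) ltac:(lia) ltac:(lia).
  have eq1 : (s.*2 - 1 - r).+1 = s.*2 - 1 - n by lia.
  rewrite eq1 (IH n (leqnn n) ltac:(lia)) in g.
  have v := vle (s.*2 - 1 - r) ltac:(lia).
  case: (ltnP (M.-2 - r) (i (s.*2 - 1 - r))) => h; last lia.
  set r' := M.-2 - i (s.*2 - 1 - r).
  have e' := IH r' ltac:(lia) ltac:(lia).
  have := dist (s.*2 - 1 - r) (s.*2 - 1 - r') ltac:(lia) ltac:(lia) ltac:(lia).
  rewrite e'; lia.
split; last first.
  apply/fsetP => e; rewrite BE in_PrSet h3; congr (_ || _).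
  apply/imfset_iotaP/imfset_iotaP => -[r rr ->].
    exists r.+1; first lia.
    rewrite /P (high r r) ?(low r r) //; try lia.
    by have -> : M.-2 - r = M.-1 - r.+1 by lia.
  exists r.-1; first lia.
  rewrite /P (high r.-1 r.-1) ?(low r.-1 r.-1) //; try lia.
  have -> : M.-2 - r.-1 = M.-1 - r by lia.
  by have -> : r.-1.+1 = r by lia.
have := h4 s.-1 ltac:(lia).
rewrite (low s.-1 s.-1) // ?(high s.-1 s.-1) //; try lia.
Qed.


Lemma main_equiv n B : primeX (n.*2 + 3) B <-> sharpR n B.
Proof.
elim: n B => [|n IH] B.
  split; last by move=> ->; apply: primePr_primeX => //; left.
  move=> pX; case: (boolP (has (fun k => newp k \in B) (iota 1 1))) => [/hasP [k]|/hasPn H].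
    rewrite mem_iota => /= kr kB.
    have [B' EB] := split_adj pX.1.1 kB.
    have k1 : k = 1 by lia.
    subst B k; move/(@primeX_Ik 1 1 B' isT): pX => pX.
    by case: (primeX1_false pX).
  have NA : forall k, 1 <= k -> k.+1 < 3 -> newp k \notin B.
    by move=> k k1 k2; apply: H; rewrite mem_iota; lia.
  case: (noadj_Pr (isT : odd 3) (leqnn 3) pX NA) => [->|[tau [_ [t _]]]] //; lia.
have EM : n.+1.*2 + 3 = (n.*2 + 3).+2 by lia.
have E5 : n.*2 + 5 = n.+1.*2 + 3 by lia.
rewrite /= E5; split.
  move=> pX; set M := n.+1.*2 + 3 in pX *.
  case: (boolP (has (fun k => newp k \in B) (iota 1 (M - 2)))) => [/hasP [k]|/hasPn H].
    rewrite mem_iota => kr kB.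
    have [B' EB] := split_adj pX.1.1 kB.
    right; exists k, B'; split; first by rewrite /M; lia.
    split=> //; apply/IH.
    move: pX; rewrite /M EM EB => /primeX_Ik; apply; rewrite /M in kr; lia.
  left; apply: noadj_Pr => //; first by rewrite /M oddD odd_double.
    rewrite /M; lia.
  move=> k k1 k2; apply: H; rewrite mem_iota /M; rewrite /M in k2; lia.
case=> [pr|[k [B' [hk [sB' ->]]]]].
  apply: primePr_primeX => //; [by rewrite oddD odd_double | lia].
rewrite EM; apply/primeX_Ik; first by lia.
exact/IH.
Qed.

Unset Implicit Arguments.

Theorem theorem4p7 (N : nat) (hN : odd N) (h3 : 3 <= N) :
  forall B : {fset {fset nat}}, primeX N B <-> sharpX N B.
Proof.
move=> B; rewrite /sharpX.
have EN : N = ((N - 3)./2).*2 + 3 by lia.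
rewrite {1}EN; exact: main_equiv.
Qed.
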